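(* For each $t\in\{0,1,\dots,T-1\}$, $k\in\mathbb{N}_0$ and $i\in\{1,\dots,N\}$, there exists a target level $\delta_i^{(k,t)}\in\mathbb{Z}$ such that in state $(x,k)$ at epoch $t$ the action $a=\delta_i^{(k,t)}$ is optimal if $x<\delta_i^{(k,t)}$ and the action $a=x$ is optimal otherwise; specifically one may take $\delta_i^{(k,t)}$ to be the smallest minimizer over $a\in\mathbb{Z}$ of $G^{N,i}_t(a,k)$. Moreover, with this choice, $\delta_i^{(k,t)}$ is non-decreasing in $k$.
   Context: Spare parts setting. Fix integers $N\ge1$, $T\ge1$, reals $\alpha_0,\beta_0>0$, and for each $i\in\{1,\dots,N\}$ unit costs $c_v^i,c_h^i,c_b^i>0$ (transportation, holding, backorder) with $c_b^i>c_v^i$. $\mathbb{N}_0=\{0,1,2,\dots\}$, $y^+=\max(y,0)$. For real $r>0$ and $p\in(0,1)$, $NB(r,p)$ is the distribution on $\mathbb{N}_0$ with $P(n)=\frac{\Gamma(n+r)}{\Gamma(r)n!}p^r(1-p)^n$; $NB(0,p)$ is the point mass at $0$. For $t\in\{0,\dots,T\}$ let $p_t=\frac{\beta_0+Nt}{\beta_0+Nt+1}$. At epoch $t$ and statistic $k$ let $Z\sim NB(\alpha_0+k,p_t)$, $K\sim NB((N-1)(\alpha_0+k),p_t)$ independent, and $C_i(a,x,k)=c_v^i(a-x)+c_h^i\mathbb{E}[(a-Z)^+]+c_b^i\mathbb{E}[(Z-a)^+]$. Define $\tilde V^{N,i}_T\equiv0$ and for $t=T-1,\dots,0$, $(x,k)\in\mathbb{Z}\times\mathbb{N}_0$: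 $\tilde V^{N,i}_t(x,k)=\min_{a\in\mathbb{Z},a\ge x}\{C_i(a,x,k)+\mathbb{E}[\tilde V^{N,i}_{t+1}(a-Z,k+Z+K)]\}$. An action (post-order inventory level) $a\ge x$ is optimal if it attains this minimum. For $t\in\{0,\dots,T-1\}$ let $G^{N,i}_t(a,k)=c_v^ia+c_h^i\mathbb{E}[(a-Z)^+]+c_b^i\mathbb{E}[(Z-a)^+]+\mathbb{E}[\tilde V^{N,i}_{t+1}(a-Z,k+Z+K)]$, so that $\tilde V^{N,i}_t(x,k)=\min_{a\ge x}\{G^{N,i}_t(a,k)-c_v^ix\}$. *)

(* Defs.v *)
From Stdlib Require Import Reals ZArith.
From Coquelicot Require Import Coquelicot.
Open Scope R_scope.

(* rising factorial r (r+1) ... (r+n-1) = Gamma(n+r)/Gamma(r) (for r>0),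
   and = [n = 0] for r = 0, so NB(0,p) is the point mass at 0. *)
Fixpoint rising (r : R) (n : nat) : R :=
  match n with
  | O => 1
  | S m => rising r m * (r + INR m)
  end.

Definition nb_pmf (r p : R) (n : nat) : R :=
  rising r n / INR (fact n) * Rpower p r * (1 - p) ^ n.

Definition nb_exp (r p : R) (f : nat -> R) : R :=
  Series (fun n => nb_pmf r p n * f n).

Definition nb_exp2 (r r' p : R) (f : nat -> nat -> R) : R :=
  Series (fun z => nb_pmf r p z * Series (fun j => nb_pmf r' p j * f z j)).

Definition pos_part (y : R) : R := Rmax y 0.

Definition p_t (N : nat) (beta0 : R) (t : nat) : R :=
  (beta0 + INR N * INR t) / (beta0 + INR N * INR t + 1).

Definition rZ (alpha0 : R) (k : nat) : R := alpha0 + INR k.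
Definition rK (N : nat) (alpha0 : R) (k : nat) : R := (INR N - 1) * (alpha0 + INR k).

Definition Ccost (N : nat) (alpha0 beta0 cv ch cb : R) (t : nat)
    (a x : Z) (k : nat) : R :=
  cv * (IZR a - IZR x)
  + ch * nb_exp (rZ alpha0 k) (p_t N beta0 t) (fun z => pos_part (IZR a - INR z))
  + cb * nb_exp (rZ alpha0 k) (p_t N beta0 t) (fun z => pos_part (INR z - IZR a)).

Definition EnextV (N : nat) (alpha0 beta0 : R) (t : nat)
    (W : Z -> nat -> R) (a : Z) (k : nat) : R :=
  nb_exp2 (rZ alpha0 k) (rK N alpha0 k) (p_t N beta0 t)
    (fun z j => W (a - Z.of_nat z)%Z (k + z + j)%nat).

Definition Qobj (N : nat) (alpha0 beta0 cv ch cb : R) (t : nat)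
    (W : Z -> nat -> R) (x : Z) (k : nat) (a : Z) : R :=
  Ccost N alpha0 beta0 cv ch cb t a x k + EnextV N alpha0 beta0 t W a k.

(* V with n epochs remaining (epoch t = T - n):
   V_T = 0, V_t(x,k) = min_{a >= x} Qobj (taken as an infimum) *)
Fixpoint Vrem (N T : nat) (alpha0 beta0 cv ch cb : R) (n : nat) : Z -> nat -> R :=
  match n with
  | O => fun _ _ => 0
  | S m => fun x k =>
      real (Glb_Rbar (fun y => exists a : Z, (x <= a)%Z /\
              y = Qobj N alpha0 beta0 cv ch cb (T - S m)
                    (Vrem N T alpha0 beta0 cv ch cb m) x k a))
  end.

Definition Vt (N T : nat) (alpha0 beta0 cv ch cb : R) (t : nat) : Z -> nat -> R :=
  Vrem N T alpha0 beta0 cv ch cb (T - t).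

Definition optimal_action (N T : nat) (alpha0 beta0 cv ch cb : R) (t : nat)
    (x : Z) (k : nat) (a : Z) : Prop :=
  (x <= a)%Z /\
  forall a' : Z, (x <= a')%Z ->
    Qobj N alpha0 beta0 cv ch cb t (Vt N T alpha0 beta0 cv ch cb (t + 1)) x k a
    <= Qobj N alpha0 beta0 cv ch cb t (Vt N T alpha0 beta0 cv ch cb (t + 1)) x k a'.

Definition Gfun (N T : nat) (alpha0 beta0 cv ch cb : R) (t : nat) (a : Z) (k : nat) : R :=
  cv * IZR a
  + ch * nb_exp (rZ alpha0 k) (p_t N beta0 t) (fun z => pos_part (IZR a - INR z))
  + cb * nb_exp (rZ alpha0 k) (p_t N beta0 t) (fun z => pos_part (INR z - IZR a))
  + EnextV N alpha0 beta0 t (Vt N T alpha0 beta0 cv ch cb (t + 1)) a k.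

Definition smallest_minimizer (g : Z -> R) (d : Z) : Prop :=
  (forall a : Z, g d <= g a) /\ (forall a : Z, (a < d)%Z -> g d < g a).

(* Main.v *)
Require Import Defs.
From Stdlib Require Import Reals ZArith.
From Coquelicot Require Import Coquelicot.
From Stdlib Require Import Lia Lra Classical ClassicalEpsilon.
Open Scope R_scope.


Definition cr (r : R) (n : nat) : R := rising r n / INR (fact n).

Lemma rising_nonneg r n : 0 <= r -> 0 <= rising r n.
Proof. intros Hr; induction n; simpl. lra. apply Rmult_le_pos; auto. pose proof (pos_INR n); lra. Qed.

Lemma rising_pos r n : 0 < r -> 0 < rising r n.
Proof. intros Hr; induction n; simpl. lra. apply Rmult_lt_0_compat; auto. pose proof (pos_INR n); lra. Qed.

Lemma INR_fact_pos n : 0 < INR (fact n).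
Proof. apply lt_0_INR, lt_O_fact. Qed.

Lemma cr_S r n : cr r (S n) = cr r n * (r + INR n) / INR (S n).
Proof.
  unfold cr. simpl rising. rewrite fact_simpl, mult_INR.
  pose proof (INR_fact_pos n). assert (0 < INR (S n)) by (apply lt_0_INR; lia).
  field. lra.
Qed.

Lemma cr_nonneg r n : 0 <= r -> 0 <= cr r n.
Proof. intros; unfold cr. apply Rdiv_le_0_compat. now apply rising_nonneg. apply INR_fact_pos. Qed.

Lemma cr_pos r n : 0 < r -> 0 < cr r n.
Proof. intros; unfold cr. apply Rdiv_lt_0_compat. now apply rising_pos. apply INR_fact_pos. Qed.

Lemma cr_0 r : cr r 0 = 1.
Proof. unfold cr; simpl; field. Qed.

Lemma ratio_lim r : 0 < r -> is_lim_seq (fun n => Rabs (cr r (S n) / cr r n)) 1.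
Proof.
  intros Hr.
  assert (Hinv : is_lim_seq (fun n => / (INR n + 1)) 0).
  { replace (Finite 0) with (Rbar_inv p_infty) by reflexivity.
    apply is_lim_seq_inv. 2: discriminate.
    eapply is_lim_seq_plus. apply is_lim_seq_INR. apply is_lim_seq_const. reflexivity. }
  apply is_lim_seq_ext with (fun n => 1 + (r - 1) * / (INR n + 1)).
  - intros n. rewrite cr_S. pose proof (cr_pos r n Hr). pose proof (pos_INR n).
    rewrite S_INR. rewrite Rabs_right.
    field. lra. apply Rle_ge. apply Rmult_le_pos. apply Rdiv_le_0_compat.
    apply Rmult_le_pos; lra. lra. left; apply Rinv_0_lt_compat; lra.
  - replace (Finite 1) with (Finite (1 + (r - 1) * 0)) by (f_equal; ring).
    apply is_lim_seq_plus'. apply is_lim_seq_const.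
    apply is_lim_seq_mult'. apply is_lim_seq_const. exact Hinv.
Qed.

Lemma radius_cr r : 0 < r -> CV_radius (cr r) = 1.
Proof.
  intros Hr. rewrite (CV_radius_finite_DAlembert _ 1).
  - simpl; f_equal; field.
  - intros n; pose proof (cr_pos r n Hr); lra.
  - lra.
  - now apply ratio_lim.
Qed.

Lemma exs_scal (c : R) (a : nat -> R) : ex_series a -> ex_series (fun n => c * a n).
Proof. intros [l H]. exists (c * l). apply (is_series_scal_l c a l H). Qed.

Lemma iss_scal (c : R) (a : nat -> R) l : is_series a l -> is_series (fun n => c * a n) (c * l).
Proof. intros H. apply (is_series_scal_l c a l H). Qed.

Lemma iss_val (a : nat -> R) (l l' : R) : is_series a l -> l = l' -> is_series a l'.
Proof. intros H ->; exact H. Qed.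

Lemma iss_ext (a b : nat -> R) (l : R) : (forall n, a n = b n) -> is_series a l -> is_series b l.
Proof. intros H H'. exact (is_series_ext a b l H H'). Qed.

Lemma exs_le (a b : nat -> R) : (forall n, Rabs (a n) <= b n) -> ex_series b -> ex_series a.
Proof. intros H1 H2. apply (ex_series_le (K:=R_AbsRing) (V:=R_CompleteNormedModule) a b); auto. Qed.

Lemma iss_plus (a b : nat -> R) la lb : is_series a la -> is_series b lb -> is_series (fun n => a n + b n) (la + lb).
Proof. intros H1 H2. apply (is_series_plus (V := R_NormedModule) a b la lb H1 H2). Qed.


Lemma ex_ps r x : 0 < r -> Rabs x < 1 -> ex_series (fun k => cr r k * x ^ k).
Proof.
  intros Hr Hx. apply ex_series_Rabs. apply CV_disk_inside. rewrite radius_cr; auto.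
Qed.

Lemma ex_psd r x : 0 < r -> Rabs x < 1 -> ex_series (fun k => PS_derive (cr r) k * x ^ k).
Proof.
  intros Hr Hx. apply ex_series_Rabs. apply CV_disk_inside. rewrite CV_radius_derive, radius_cr; auto.
Qed.

Lemma PSd_cr r n : PS_derive (cr r) n = (r + INR n) * cr r n.
Proof.
  unfold PS_derive. rewrite cr_S. assert (0 < INR (S n)) by (apply lt_0_INR; lia). field; lra.
Qed.

Lemma ode r x : 0 < r -> Rabs x < 1 ->
  (1 - x) * PSeries (PS_derive (cr r)) x = r * PSeries (cr r) x.
Proof.
  intros Hr Hx. unfold PSeries.
  set (b := fun n => INR n * cr r n * x ^ n).
  assert (Hb1 : ex_series (fun k => b (S k))).
  { apply ex_series_ext with (fun k => x * (PS_derive (cr r) k * x ^ k)).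
    intros k; unfold b, PS_derive; simpl; ring.
    apply (exs_scal x). now apply ex_psd. }
  assert (Hb : ex_series b) by (apply ex_series_incr_1; exact Hb1).
  assert (E1 : Series (fun k => PS_derive (cr r) k * x ^ k) =
               r * Series (fun k => cr r k * x ^ k) + Series b).
  { rewrite <- Series_scal_l, <- Series_plus.
    apply Series_ext; intros n; rewrite PSd_cr; unfold b; ring.
    apply (exs_scal r). now apply ex_ps. exact Hb. }
  assert (E2 : Series b = x * Series (fun k => PS_derive (cr r) k * x ^ k)).
  { rewrite Series_incr_1 by exact Hb. rewrite <- Series_scal_l.
    unfold b at 1; simpl INR. rewrite Rmult_0_l, Rmult_0_l, Rplus_0_l.
    apply Series_ext; intros k; unfold b, PS_derive; simpl; ring. }
  rewrite E2 in E1. set (P := Series _) in *. set (S := Series _) in E1 |- *.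
  replace ((1 - x) * P) with (P - x * P) by ring. lra.
Qed.

Lemma PSeries_cr_val r q : 0 < r -> 0 <= q < 1 ->
  PSeries (cr r) q * exp (r * ln (1 - q)) = 1.
Proof.
  intros Hr Hq.
  set (g := fun y => PSeries (cr r) y * exp (r * ln (1 - y))).
  assert (Hd : forall y, -1 < y < 1 -> is_derive g y 0).
  { intros y Hy.
    assert (Hy' : Rabs y < 1) by (apply Rabs_def1; lra).
    assert (H1 : is_derive (PSeries (cr r)) y (PSeries (PS_derive (cr r)) y)).
    { apply is_derive_PSeries. rewrite radius_cr; auto. }
    assert (H2 : is_derive (fun y => exp (r * ln (1 - y))) y
                   (exp (r * ln (1 - y)) * (r * (- / (1 - y))))).
    { auto_derive. lra. replace (1 + - y) with (1 - y) by ring. field. lra. }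
    pose proof (is_derive_mult _ _ _ _ _ H1 H2 Rmult_comm) as H3.
    cbv beta in H3.
    match type of H3 with is_derive _ _ ?d => assert (Hz : d = 0) end.
    2: { rewrite Hz in H3. unfold g. exact H3. }
    pose proof (ode r y Hr Hy'). simpl. unfold plus, mult; simpl.
    replace (PSeries (PS_derive (cr r)) y * exp (r * ln (1 - y)) +
             PSeries (cr r) y * (exp (r * ln (1 - y)) * (r * - / (1 - y))))
      with (exp (r * ln (1 - y)) / (1 - y) *
            ((1 - y) * PSeries (PS_derive (cr r)) y - r * PSeries (cr r) y)) by (field; lra).
    rewrite H. ring. }
  destruct (MVT_gen g 0 q (fun _ => 0)) as [c [_ Hc]].
  - intros y Hy. apply Hd. unfold Rmin, Rmax in Hy. destruct Rle_dec; lra.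
  - intros y Hy. apply continuity_pt_filterlim.
    apply (ex_derive_continuous (K := R_AbsRing) (V := R_NormedModule) g y).
    eexists. apply Hd. unfold Rmin, Rmax in Hy. destruct Rle_dec; lra.
  - assert (g q = g 0) by lra. unfold g in H. rewrite H. rewrite PSeries_0, cr_0.
    replace (1 - 0) with 1 by ring. rewrite ln_1, Rmult_0_r, exp_0. ring.
Qed.


Lemma is_series_zero : is_series (fun _ : nat => 0) 0.
Proof.
  apply is_series_Reals. intros eps He. exists 0%nat. intros n _.
  rewrite sum_cte. unfold R_dist. rewrite Rmult_0_l, Rminus_0_r, Rabs_R0. lra.
Qed.

Lemma is_series_shift0 (a : nat -> R) l : a 0%nat = 0 -> is_series (fun k => a (S k)) l -> is_series a l.
Proof.
  intros H0 H. apply is_series_decr_1. rewrite H0.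
  eapply is_series_ext. intros n; reflexivity. unfold plus, opp; simpl.
  rewrite Ropp_0, Rplus_0_r. exact H.
Qed.

Lemma rising_0_S n : rising 0 (S n) = 0.
Proof. induction n; simpl in *. ring. rewrite IHn; ring. Qed.

Lemma nb_pmf_cr r p n : nb_pmf r p n = Rpower p r * (cr r n * (1 - p) ^ n).
Proof. unfold nb_pmf, cr; ring. Qed.

Lemma nb_norm r p : 0 <= r -> 0 < p < 1 -> is_series (nb_pmf r p) 1.
Proof.
  intros Hr Hp. destruct (Req_dec r 0) as [-> | Hr0].
  - apply is_series_decr_1.
    match goal with |- is_series _ ?v => replace v with 0 end.
    2: { unfold plus, opp; simpl. unfold nb_pmf; simpl. unfold Rpower. rewrite Rmult_0_l, exp_0. field. }
    eapply is_series_ext. 2: apply is_series_zero.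
    intros n; simpl. unfold nb_pmf. rewrite rising_0_S. unfold Rdiv; ring.
  - assert (Hr' : 0 < r) by lra.
    eapply iss_ext. intros n; symmetry; apply nb_pmf_cr.
    eapply iss_val. apply iss_scal. apply Series_correct. apply ex_ps; auto.
    apply Rabs_def1; lra.
    pose proof (PSeries_cr_val r (1 - p) Hr' ltac:(lra)).
    replace (1 - (1 - p)) with p in H by ring.
    unfold PSeries in H. unfold Rpower. rewrite Rmult_comm; exact H.
Qed.

Lemma nb_pmf_nonneg r p n : 0 <= r -> 0 < p < 1 -> 0 <= nb_pmf r p n.
Proof.
  intros Hr Hp. rewrite nb_pmf_cr. apply Rmult_le_pos. unfold Rpower; left; apply exp_pos.
  apply Rmult_le_pos. now apply cr_nonneg. apply pow_le; lra.
Qed.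

Lemma rising_shift r n : rising (r + 1) n * r = rising r n * (r + INR n).
Proof.
  induction n; simpl. ring.
  replace (rising (r + 1) n * (r + 1 + INR n) * r) with (rising (r + 1) n * r * (r + 1 + INR n)) by ring.
  rewrite IHn. destruct n; simpl; ring.
Qed.

Lemma nb_mean r p : 0 <= r -> 0 < p < 1 ->
  is_series (fun n => nb_pmf r p n * INR n) (r * (1 - p) / p).
Proof.
  intros Hr Hp. apply is_series_shift0. simpl; ring.
  apply iss_ext with (fun n => (r * (1 - p) / p) * nb_pmf (r + 1) p n).
  - intros n. unfold nb_pmf. rewrite Rpower_plus, Rpower_1 by lra.
    simpl rising. rewrite fact_simpl, mult_INR.
    pose proof (INR_fact_pos n). assert (0 < INR (S n)) by (apply lt_0_INR; lia).
    replace (rising r n * (r + INR n)) with (rising (r + 1) n * r) by apply rising_shift.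
    simpl pow. rewrite S_INR in *. field. lra.
  - eapply iss_val. apply iss_scal. apply nb_norm; lra. ring.
Qed.


Lemma sumn_S (a : nat -> R) n : sum_n a (S n) = sum_n a n + a (S n).
Proof. rewrite sum_Sn. reflexivity. Qed.
Lemma sumn_O (a : nat -> R) : sum_n a 0 = a 0%nat.
Proof. apply sum_O. Qed.

Lemma Series_le_gen (u v : nat -> R) : ex_series u -> ex_series v ->
  (forall n, u n <= v n) -> Series u <= Series v.
Proof.
  intros [lu Hu] [lv Hv] H. rewrite (is_series_unique _ _ Hu), (is_series_unique _ _ Hv).
  assert (Rbar_le lu lv). { apply (is_lim_seq_le (sum_n u) (sum_n v)); auto.
    intros n; induction n. rewrite !sumn_O; auto. rewrite !sumn_S. specialize (H (S n)); lra. }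
  exact H0.
Qed.

Section Exp.
Variables (r p : R).
Hypothesis Hr : 0 <= r.
Hypothesis Hp : 0 < p < 1.

Lemma ex_bnd (f : nat -> R) B : (forall n, Rabs (f n) <= B) -> ex_series (fun n => nb_pmf r p n * f n).
Proof.
  intros Hf. apply (exs_le _ (fun n => B * nb_pmf r p n)).
  - intros n.
    rewrite Rabs_mult, Rabs_right by (apply Rle_ge, nb_pmf_nonneg; auto).
    rewrite Rmult_comm. apply Rmult_le_compat_r. apply nb_pmf_nonneg; auto. auto.
  - eexists. apply iss_scal. apply nb_norm; auto.
Qed.

Lemma ex_lin (f : nat -> R) a b : (forall n, Rabs (f n) <= a + b * INR n) ->
  ex_series (fun n => nb_pmf r p n * f n).
Proof.
  intros Hf. apply (exs_le _ (fun n => a * nb_pmf r p n + b * (nb_pmf r p n * INR n))).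
  - intros n.
    rewrite Rabs_mult, Rabs_right by (apply Rle_ge, nb_pmf_nonneg; auto).
    replace (a * nb_pmf r p n + b * (nb_pmf r p n * INR n)) with (nb_pmf r p n * (a + b * INR n)) by ring.
    apply Rmult_le_compat_l. apply nb_pmf_nonneg; auto. auto.
  - eexists. apply iss_plus. apply iss_scal. apply nb_norm; auto.
    apply iss_scal. apply nb_mean; auto.
Qed.

Lemma exp_const c : nb_exp r p (fun _ => c) = c.
Proof.
  unfold nb_exp. apply is_series_unique.
  apply iss_ext with (fun n => c * nb_pmf r p n). intros n; ring.
  eapply iss_val. apply iss_scal. apply nb_norm; auto. ring.
Qed.

Lemma exp_le (f g : nat -> R) : ex_series (fun n => nb_pmf r p n * f n) ->
  ex_series (fun n => nb_pmf r p n * g n) -> (forall n, f n <= g n) ->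
  nb_exp r p f <= nb_exp r p g.
Proof.
  intros H1 H2 H. unfold nb_exp. apply Series_le_gen; auto.
  intros n. apply Rmult_le_compat_l. apply nb_pmf_nonneg; auto. auto.
Qed.

Lemma exp_bnd_le (f : nat -> R) B K : (forall n, Rabs (f n) <= K) -> (forall n, f n <= B) -> nb_exp r p f <= B.
Proof.
  intros H1 H2. rewrite <- (exp_const B). apply exp_le; auto. eapply ex_bnd; eauto.
  apply (ex_bnd _ (Rabs B)). intros; lra.
Qed.

Lemma exp_bnd_ge (f : nat -> R) B K : (forall n, Rabs (f n) <= K) -> (forall n, - B <= f n) -> - B <= nb_exp r p f.
Proof.
  intros H1 H2. rewrite <- (exp_const (- B)). apply exp_le; auto.
  apply (ex_bnd _ (Rabs (- B))). intros; lra. eapply ex_bnd; eauto.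
Qed.

Lemma exp_nonneg (f : nat -> R) : ex_series (fun n => nb_pmf r p n * f n) -> (forall n, 0 <= f n) -> 0 <= nb_exp r p f.
Proof.
  intros Hex H. unfold nb_exp.
  assert (Z : Series (fun _ : nat => 0) = 0) by (apply is_series_unique, is_series_zero).
  apply Rle_trans with (Series (fun _ => 0)). right; symmetry; exact Z.
  apply Series_le_gen; auto.
  exists 0; apply is_series_zero. intros n. apply Rmult_le_pos; auto. apply nb_pmf_nonneg; auto.
Qed.

Lemma exp_plus (f g : nat -> R) : ex_series (fun n => nb_pmf r p n * f n) ->
  ex_series (fun n => nb_pmf r p n * g n) ->
  nb_exp r p (fun n => f n + g n) = nb_exp r p f + nb_exp r p g.
Proof.
  intros H1 H2. unfold nb_exp. rewrite <- Series_plus by auto. apply Series_ext; intros; ring.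
Qed.

Lemma exp_scal (f : nat -> R) c : nb_exp r p (fun n => c * f n) = c * nb_exp r p f.
Proof. unfold nb_exp. rewrite <- Series_scal_l. apply Series_ext; intros; ring. Qed.

Lemma exp_minus (f g : nat -> R) : ex_series (fun n => nb_pmf r p n * f n) ->
  ex_series (fun n => nb_pmf r p n * g n) ->
  nb_exp r p (fun n => f n - g n) = nb_exp r p f - nb_exp r p g.
Proof.
  intros H1 H2. unfold nb_exp. rewrite <- Series_minus by auto. apply Series_ext; intros; ring.
Qed.

Lemma exp_ext (f g : nat -> R) : (forall n, f n = g n) -> nb_exp r p f = nb_exp r p g.
Proof. intros H; unfold nb_exp; apply Series_ext; intros; rewrite H; auto. Qed.

Lemma exp_mean_le (f : nat -> R) a b : 0 <= b -> (forall n, 0 <= f n) -> (forall n, f n <= a + b * INR n) ->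
  nb_exp r p f <= a + b * (r * (1 - p) / p).
Proof.
  intros Hb H0 H. unfold nb_exp.
  replace (a + b * (r * (1 - p) / p)) with (Series (fun n => nb_pmf r p n * (a + b * INR n))).
  apply Series_le_gen. apply (ex_lin _ a b). intros n; rewrite Rabs_right; auto. apply Rle_ge; auto.
  apply (ex_lin _ (Rabs a) b). intros n. pose proof (pos_INR n). rewrite Rabs_right.
  pose proof (Rle_abs a); lra. specialize (H0 n); specialize (H n); lra.
  intros n. apply Rmult_le_compat_l. apply nb_pmf_nonneg; auto. auto.
  apply is_series_unique.
  apply iss_ext with (fun n => a * nb_pmf r p n + b * (nb_pmf r p n * INR n)). intros n; ring.
  eapply iss_val. apply iss_plus. apply iss_scal. apply nb_norm; auto. apply iss_scal. apply nb_mean; auto. ring.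
Qed.

End Exp.


Lemma cr_shift r n : r * cr (r + 1) n = (r + INR n) * cr r n.
Proof.
  unfold cr. pose proof (INR_fact_pos n).
  replace (r * (rising (r + 1) n / INR (fact n))) with (rising (r + 1) n * r / INR (fact n)) by (field; lra).
  rewrite rising_shift. field. lra.
Qed.

Lemma cr_hockey r n : cr (r + 1) (S n) = cr (r + 1) n + cr r (S n).
Proof.
  rewrite !cr_S. pose proof (cr_shift r n). assert (0 < INR (S n)) by (apply lt_0_INR; lia).
  rewrite S_INR in *. apply Rmult_eq_reg_r with (INR n + 1). 2: lra.
  field_simplify; try lra.
Qed.

Section Dom.
Variables (r p : R).
Hypothesis Hr : 0 <= r.
Hypothesis Hp : 0 < p < 1.

Fixpoint Tq (n : nat) : R :=
  match n with O => nb_pmf r p 0 | S m => (1 - p) * Tq m + nb_pmf r p (S m) end.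

Lemma Tq_nonneg n : 0 <= Tq n.
Proof.
  induction n; simpl. apply nb_pmf_nonneg; auto.
  pose proof (nb_pmf_nonneg r p (S n) Hr Hp). apply Rplus_le_le_0_compat; auto. apply Rmult_le_pos; lra.
Qed.

Lemma pmf_T n : nb_pmf (r + 1) p n = p * Tq n.
Proof.
  induction n.
  - simpl. rewrite !nb_pmf_cr, Rpower_plus, Rpower_1 by lra. rewrite !cr_0. simpl; ring.
  - simpl Tq. rewrite Rmult_plus_distr_l, <- Rmult_assoc, (Rmult_comm p (1 - p)), Rmult_assoc, <- IHn.
    rewrite !nb_pmf_cr, Rpower_plus, Rpower_1 by lra. rewrite cr_hockey. simpl pow. ring.
Qed.

Lemma Ddiff M : sum_n (nb_pmf r p) M - sum_n (nb_pmf (r + 1) p) M = (1 - p) * Tq M.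
Proof.
  induction M.
  - rewrite !sumn_O, pmf_T. simpl; ring.
  - pose proof (pmf_T (S M)) as HT. simpl Tq in HT |- *. rewrite !sumn_S, HT.
    replace (sum_n (nb_pmf r p) M + nb_pmf r p (S M) - (sum_n (nb_pmf (r + 1) p) M + p * ((1 - p) * Tq M + nb_pmf r p (S M))))
      with ((sum_n (nb_pmf r p) M - sum_n (nb_pmf (r + 1) p) M) + nb_pmf r p (S M) - p * ((1 - p) * Tq M + nb_pmf r p (S M))) by ring.
    rewrite IHM. ring.
Qed.

Lemma Qpos (h : nat -> R) : (forall n, h (S n) <= h n) -> forall M,
  sum_n (fun n => nb_pmf r p n * h n) M - sum_n (fun n => nb_pmf (r + 1) p n * h n) M
  >= (sum_n (nb_pmf r p) M - sum_n (nb_pmf (r + 1) p) M) * h M.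
Proof.
  intros Hh M. induction M.
  - rewrite !sumn_O. right; ring.
  - rewrite !sumn_S.
    set (D := sum_n (nb_pmf r p) M - sum_n (nb_pmf (r + 1) p) M) in *.
    assert (HD : 0 <= D) by (unfold D; rewrite Ddiff; apply Rmult_le_pos; [lra | apply Tq_nonneg]).
    replace (sum_n (nb_pmf r p) M + nb_pmf r p (S M) - (sum_n (nb_pmf (r + 1) p) M + nb_pmf (r + 1) p (S M)))
      with (D + nb_pmf r p (S M) - nb_pmf (r + 1) p (S M)) by (unfold D; ring).
    specialize (Hh M). assert (D * h (S M) <= D * h M) by (apply Rmult_le_compat_l; auto).
    lra.
Qed.

Lemma dom1 (h : nat -> R) B : (forall n, h (S n) <= h n) -> (forall n, Rabs (h n) <= B) ->
  nb_exp (r + 1) p h <= nb_exp r p h.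
Proof.
  intros Hh HB.
  assert (Hr1 : 0 <= r + 1) by lra.
  assert (E1 := Series_correct _ (ex_bnd r p Hr Hp h B HB)).
  assert (E2 := Series_correct _ (ex_bnd (r + 1) p Hr1 Hp h B HB)).
  assert (N1 := nb_norm r p Hr Hp). assert (N2 := nb_norm (r + 1) p Hr1 Hp).
  unfold nb_exp.
  set (u := fun M => sum_n (fun n => nb_pmf r p n * h n) M - sum_n (fun n => nb_pmf (r + 1) p n * h n) M).
  set (v := fun M => - B * (sum_n (nb_pmf r p) M - sum_n (nb_pmf (r + 1) p) M)).
  assert (Hu : is_lim_seq u (Series (fun n => nb_pmf r p n * h n) - Series (fun n => nb_pmf (r + 1) p n * h n))).
  { apply is_lim_seq_minus'; auto. }
  assert (Hv : is_lim_seq v (- B * (1 - 1))).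
  { apply is_lim_seq_mult'. apply is_lim_seq_const. apply is_lim_seq_minus'; auto. }
  assert (Hle : forall M, v M <= u M).
  { intros M. unfold u, v. pose proof (Qpos h Hh M).
    set (D := sum_n (nb_pmf r p) M - sum_n (nb_pmf (r + 1) p) M) in *.
    assert (HD : 0 <= D) by (unfold D; rewrite Ddiff; apply Rmult_le_pos; [lra | apply Tq_nonneg]).
    specialize (HB M). apply Rabs_le_between in HB.
    assert (- B * D <= D * h M) by nra. lra. }
  pose proof (is_lim_seq_le v u _ _ Hle Hv Hu). simpl in H. lra.
Qed.

End Dom.

Lemma domm (h : nat -> R) B r p m : 0 <= r -> 0 < p < 1 ->
  (forall n, h (S n) <= h n) -> (forall n, Rabs (h n) <= B) ->
  nb_exp (r + INR m) p h <= nb_exp r p h.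
Proof.
  intros Hr Hp Hh HB. induction m.
  - simpl. rewrite Rplus_0_r. lra.
  - rewrite S_INR. replace (r + (INR m + 1)) with ((r + INR m) + 1) by ring.
    eapply Rle_trans. apply (dom1 (r + INR m) p) with (B := B); auto. pose proof (pos_INR m); lra. auto.
Qed.


Lemma least_nat (P : nat -> Prop) n : P n -> exists m, P m /\ forall k, (k < m)%nat -> ~ P k.
Proof.
  revert n. apply (well_founded_ind lt_wf (fun n => P n -> exists m, P m /\ forall k, (k < m)%nat -> ~ P k)).
  intros n IH Hn. destruct (classic (exists k, (k < n)%nat /\ P k)) as [[k [Hk1 Hk2]] | Hno].
  - exact (IH k Hk1 Hk2).
  - exists n. split; auto. intros k Hk HP. apply Hno. eauto.
Qed.

Section Argmin.
Variable G : Z -> R.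
Let D a := G (a + 1)%Z - G a.

Lemma Dmono_ge (Hm : forall a, D a <= D (a + 1)%Z) : forall a n, D a <= D (a + Z.of_nat n)%Z.
Proof.
  intros a n; induction n. rewrite Z.add_0_r; lra.
  eapply Rle_trans. apply IHn. replace (a + Z.of_nat (S n))%Z with (a + Z.of_nat n + 1)%Z by lia. apply Hm.
Qed.

Lemma argmin_exists (Hm : forall a, D a <= D (a + 1)%Z) (a0 L0 : Z) :
  0 <= D a0 -> (forall a, (a < L0)%Z -> D a < 0) ->
  exists d, (forall a, (a < d)%Z -> D a < 0) /\ (forall a, (d <= a)%Z -> 0 <= D a).
Proof.
  intros Ha0 HL.
  assert (HaL : (L0 <= a0)%Z). { destruct (Z_lt_le_dec a0 L0); auto. specialize (HL a0 l); lra. }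
  destruct (least_nat (fun n => 0 <= D (L0 + Z.of_nat n)%Z) (Z.to_nat (a0 - L0))) as [m [Hm1 Hm2]].
  { rewrite Z2Nat.id by lia. replace (L0 + (a0 - L0))%Z with a0 by lia. auto. }
  exists (L0 + Z.of_nat m)%Z. split.
  - intros a Ha. destruct (Z_lt_le_dec a L0). auto.
    specialize (Hm2 (Z.to_nat (a - L0)) ltac:(lia)). rewrite Z2Nat.id in Hm2 by lia.
    replace (L0 + (a - L0))%Z with a in Hm2 by lia. lra.
  - intros a Ha. eapply Rle_trans. apply Hm1. pose proof (Dmono_ge Hm (L0 + Z.of_nat m) (Z.to_nat (a - (L0 + Z.of_nat m)))).
    rewrite Z2Nat.id in H by lia. replace (L0 + Z.of_nat m + (a - (L0 + Z.of_nat m)))%Z with a in H by lia. auto.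
Qed.

Lemma G_up (x : Z) : (forall a, (x <= a)%Z -> 0 <= D a) -> forall a, (x <= a)%Z -> G x <= G a.
Proof.
  intros H a Ha. replace a with (x + Z.of_nat (Z.to_nat (a - x)))%Z by (rewrite Z2Nat.id; lia).
  induction (Z.to_nat (a - x)). rewrite Z.add_0_r; lra.
  replace (x + Z.of_nat (S n))%Z with (x + Z.of_nat n + 1)%Z by lia.
  assert (0 <= D (x + Z.of_nat n)%Z) by (apply H; lia). unfold D in H0. lra.
Qed.

Lemma G_down (d : Z) : (forall a, (a < d)%Z -> D a < 0) -> forall a, (a < d)%Z -> G d < G a.
Proof.
  intros H a Ha. replace a with (d - Z.of_nat (S (Z.to_nat (d - a - 1))))%Z by (rewrite Nat2Z.inj_succ, Z2Nat.id; lia).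
  induction (Z.to_nat (d - a - 1)).
  - specialize (H (d - 1)%Z ltac:(lia)). unfold D in H. replace (d - 1 + 1)%Z with d in H by lia.
    replace (d - Z.of_nat 1)%Z with (d - 1)%Z by lia. lra.
  - specialize (H (d - Z.of_nat (S (S n)))%Z ltac:(lia)). unfold D in H.
    replace (d - Z.of_nat (S (S n)) + 1)%Z with (d - Z.of_nat (S n))%Z in H by lia. lra.
Qed.

End Argmin.

Lemma glb_min (S : R -> Prop) m : S m -> (forall y, S y -> m <= y) -> real (Glb_Rbar S) = m.
Proof.
  intros H1 H2. rewrite (is_glb_Rbar_unique S m). reflexivity.
  split. intros y Hy. simpl. auto. intros b Hb. apply Hb. auto.
Qed.


Definition Wf (V : Z -> nat -> R) x k := V (x + 1)%Z k - V x k.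

Definition indZ (a : Z) (n : nat) : R := if Z_le_dec (Z.of_nat n) a then 1 else 0.

Lemma pt_range N beta0 t : 0 < beta0 -> 0 < p_t N beta0 t < 1.
Proof.
  intros Hb. unfold p_t. assert (0 <= INR N * INR t) by (apply Rmult_le_pos; apply pos_INR).
  split. apply Rdiv_lt_0_compat; lra. apply (Rmult_lt_reg_r (beta0 + INR N * INR t + 1)). lra. unfold Rdiv. rewrite Rmult_assoc, Rinv_l by lra. lra.
Qed.

Lemma pos_part_abs y : Rabs (pos_part y) <= Rabs y.
Proof. unfold pos_part, Rmax. destruct Rle_dec; rewrite ?Rabs_R0; auto using Rabs_pos. lra. Qed.

Lemma pos_part_nonneg y : 0 <= pos_part y.
Proof. unfold pos_part, Rmax. destruct Rle_dec; lra. Qed.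

Lemma phi_ind (a : Z) n : pos_part (IZR (a + 1) - INR n) - pos_part (IZR a - INR n) = indZ a n.
Proof.
  unfold indZ, pos_part. rewrite INR_IZR_INZ, plus_IZR. destruct Z_le_dec as [H|H].
  - apply IZR_le in H. unfold Rmax; repeat destruct Rle_dec; lra.
  - assert (H' : (a + 1 <= Z.of_nat n)%Z) by lia. apply IZR_le in H'. rewrite plus_IZR in H'.
    unfold Rmax; repeat destruct Rle_dec; lra.
Qed.

Lemma psi_ind (a : Z) n : pos_part (INR n - IZR (a + 1)) - pos_part (INR n - IZR a) = indZ a n - 1.
Proof.
  unfold indZ, pos_part. rewrite INR_IZR_INZ, plus_IZR. destruct Z_le_dec as [H|H].
  - apply IZR_le in H. unfold Rmax; repeat destruct Rle_dec; lra.
  - assert (H' : (a + 1 <= Z.of_nat n)%Z) by lia. apply IZR_le in H'. rewrite plus_IZR in H'.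
    unfold Rmax; repeat destruct Rle_dec; lra.
Qed.

Lemma indZ_bnd a n : Rabs (indZ a n) <= 1.
Proof. unfold indZ; destruct Z_le_dec; rewrite ?Rabs_R1, ?Rabs_R0; lra. Qed.

Lemma indZ_dec a n : indZ a (S n) <= indZ a n.
Proof. unfold indZ; repeat destruct Z_le_dec; try lra. lia. Qed.

Lemma indZ_mono a n : indZ a n <= indZ (a + 1) n.
Proof. unfold indZ; repeat destruct Z_le_dec; try lra. lia. Qed.

Lemma indZ_neg a n : (a < 0)%Z -> indZ a n = 0.
Proof. unfold indZ; destruct Z_le_dec; auto. lia. Qed.

Lemma abs_sub_bnd (a : Z) (z : nat) : IZR (Z.abs (a - Z.of_nat z)) <= IZR (Z.abs a) + INR z.
Proof. rewrite INR_IZR_INZ, <- plus_IZR. apply IZR_le. lia. Qed.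

Lemma rZ_pos a0 k : 0 < a0 -> 0 < rZ a0 k.
Proof. unfold rZ; pose proof (pos_INR k); lra. Qed.

Lemma rK_nonneg N a0 k : (1 <= N)%nat -> 0 < a0 -> 0 <= rK N a0 k.
Proof.
  intros HN Ha. unfold rK. apply Rmult_le_pos. apply le_INR in HN. simpl in HN. lra.
  pose proof (pos_INR k); lra.
Qed.

Lemma rZ_shift a0 k k' : (k <= k')%nat -> rZ a0 k' = rZ a0 k + INR (k' - k).
Proof. intros H. unfold rZ. rewrite minus_INR by auto. ring. Qed.

Lemma rK_shift N a0 k k' : (1 <= N)%nat -> (k <= k')%nat -> rK N a0 k' = rK N a0 k + INR ((N - 1) * (k' - k)).
Proof. intros H1 H. unfold rK. rewrite mult_INR, !minus_INR by auto. simpl. ring. Qed.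


Section Stage.
Variables (N : nat) (alpha0 beta0 cv ch cb : R) (t : nat) (V : Z -> nat -> R).
Hypotheses (HN : (1 <= N)%nat) (Ha0 : 0 < alpha0) (Hb0 : 0 < beta0)
  (Hcv : 0 < cv) (Hch : 0 < ch) (Hcb : 0 < cb) (Hcvb : cv < cb).
Variables (M A C : R) (L : Z).
Hypotheses (HM : 0 <= M) (HC : 0 <= C) (HV0 : forall x k, 0 <= V x k)
  (HVA : forall k, V 0%Z k <= A + C * INR k)
  (HWb : forall x k, - cv <= Wf V x k <= M)
  (HWx : forall x k, Wf V x k <= Wf V (x + 1)%Z k)
  (HWk : forall x k k', (k <= k')%nat -> Wf V x k' <= Wf V x k)
  (HWL : forall x k, (x < L)%Z -> Wf V x k <= 0).

Let p := p_t N beta0 t.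
Let r k := rZ alpha0 k.
Let s k := rK N alpha0 k.
Let mu (x : R) := x * (1 - p) / p.
Let Mc := M + cv.

Lemma Hp : 0 < p < 1. Proof. apply pt_range; auto. Qed.
Lemma Hr k : 0 <= r k. Proof. left; apply rZ_pos; auto. Qed.
Lemma Hs k : 0 <= s k. Proof. apply rK_nonneg; auto. Qed.
Lemma Hmu x : 0 <= x -> 0 <= mu x.
Proof. intros; unfold mu. pose proof Hp. apply Rdiv_le_0_compat. apply Rmult_le_pos; lra. lra. Qed.

Lemma Wabs x k : Rabs (Wf V x k) <= Mc.
Proof. specialize (HWb x k). unfold Mc. apply Rabs_le; lra. Qed.

Lemma Vstep_up y k : V (y + 1)%Z k <= V y k + Mc.
Proof. specialize (HWb y k). unfold Wf in HWb. unfold Mc. lra. Qed.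
Lemma Vstep_down y k : V y k <= V (y + 1)%Z k + Mc.
Proof. specialize (HWb y k). unfold Wf in HWb. unfold Mc. lra. Qed.

Lemma Vbound x k : V x k <= A + C * INR k + Mc * IZR (Z.abs x).
Proof.
  assert (Hpos : forall n, V (Z.of_nat n) k <= V 0%Z k + Mc * INR n).
  { induction n. simpl. lra. rewrite Nat2Z.inj_succ, S_INR. unfold Z.succ.
    pose proof (Vstep_up (Z.of_nat n) k). lra. }
  assert (Hneg : forall n, V (- Z.of_nat n)%Z k <= V 0%Z k + Mc * INR n).
  { induction n. simpl. lra. rewrite Nat2Z.inj_succ, S_INR.
    pose proof (Vstep_down (- Z.succ (Z.of_nat n))%Z k).
    replace (- Z.succ (Z.of_nat n) + 1)%Z with (- Z.of_nat n)%Z in H by lia. lra. }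
  specialize (HVA k).
  destruct (Z_le_dec 0 x).
  - specialize (Hpos (Z.to_nat x)). rewrite Z2Nat.id in Hpos by lia.
    rewrite INR_IZR_INZ, Z2Nat.id in Hpos by lia. rewrite Z.abs_eq by lia. lra.
  - specialize (Hneg (Z.to_nat (- x))). rewrite Z2Nat.id in Hneg by lia.
    rewrite INR_IZR_INZ, Z2Nat.id in Hneg by lia. rewrite Z.abs_neq by lia.
    replace (- - x)%Z with x in Hneg by lia. lra.
Qed.

Definition bnd (a : Z) k z := A + C * (INR k + INR z) + Mc * (IZR (Z.abs a) + INR z).

Definition inner (a : Z) k z := nb_exp (s k) p (fun j => V (a - Z.of_nat z)%Z (k + z + j)%nat).

Lemma f_bnd a k z j : V (a - Z.of_nat z)%Z (k + z + j)%nat <= bnd a k z + C * INR j.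
Proof.
  eapply Rle_trans. apply Vbound. unfold bnd. rewrite !plus_INR.
  pose proof (abs_sub_bnd a z). assert (0 <= Mc) by (unfold Mc; lra).
  assert (Mc * IZR (Z.abs (a - Z.of_nat z)) <= Mc * (IZR (Z.abs a) + INR z)) by (apply Rmult_le_compat_l; auto).
  lra.
Qed.

Lemma inner_ex a k z : ex_series (fun j => nb_pmf (s k) p j * V (a - Z.of_nat z)%Z (k + z + j)%nat).
Proof.
  apply (ex_lin (s k) p (Hs k) Hp _ (bnd a k z) C). intros j.
  rewrite Rabs_right by (apply Rle_ge; auto). apply f_bnd.
Qed.

Lemma inner_nonneg a k z : 0 <= inner a k z.
Proof. apply exp_nonneg. apply Hs. apply Hp. apply inner_ex. auto. Qed.

Lemma inner_le a k z : inner a k z <= bnd a k z + C * mu (s k).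
Proof. apply exp_mean_le. apply Hs. apply Hp. auto. auto. apply f_bnd. Qed.

Lemma outer_ex a k : ex_series (fun z => nb_pmf (r k) p z * inner a k z).
Proof.
  apply (ex_lin (r k) p (Hr k) Hp _ (A + C * INR k + Mc * IZR (Z.abs a) + C * mu (s k)) (C + Mc)).
  intros z. rewrite Rabs_right by (apply Rle_ge, inner_nonneg).
  eapply Rle_trans. apply inner_le. unfold bnd. right; ring.
Qed.

Lemma EnextV_eq a k : EnextV N alpha0 beta0 t V a k = nb_exp (r k) p (inner a k).
Proof. reflexivity. Qed.

Lemma EnextV_nonneg a k : 0 <= EnextV N alpha0 beta0 t V a k.
Proof. rewrite EnextV_eq. apply exp_nonneg. apply Hr. apply Hp. apply outer_ex. apply inner_nonneg. Qed.

Lemma EnextV_le a k : EnextV N alpha0 beta0 t V a k <=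
  (A + C * INR k + Mc * IZR (Z.abs a) + C * mu (s k)) + (C + Mc) * mu (r k).
Proof.
  rewrite EnextV_eq. apply exp_mean_le. apply Hr. apply Hp. unfold Mc; lra.
  apply inner_nonneg. intros z. eapply Rle_trans. apply inner_le. unfold bnd. right; ring.
Qed.

Definition winner (a : Z) k z := nb_exp (s k) p (fun j => Wf V (a - Z.of_nat z)%Z (k + z + j)%nat).
Definition WW (a : Z) k := nb_exp (r k) p (winner a k).

Lemma winner_ex a k z : ex_series (fun j => nb_pmf (s k) p j * Wf V (a - Z.of_nat z)%Z (k + z + j)%nat).
Proof. apply (ex_bnd (s k) p (Hs k) Hp _ Mc). intros; apply Wabs. Qed.

Lemma winner_bnd a k z : - cv <= winner a k z <= M.
Proof.
  split.
  - apply exp_bnd_ge with (K := Mc) (f := fun j => Wf V (a - Z.of_nat z)%Z (k + z + j)%nat). apply Hs. apply Hp.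
    intros; apply Wabs.
    intros; apply HWb.
  - apply exp_bnd_le with (K := Mc) (f := fun j => Wf V (a - Z.of_nat z)%Z (k + z + j)%nat). apply Hs. apply Hp.
    intros; apply Wabs.
    intros; apply HWb.
Qed.

Lemma winner_abs a k z : Rabs (winner a k z) <= Mc.
Proof. pose proof (winner_bnd a k z). unfold Mc; apply Rabs_le; lra. Qed.

Lemma WW_ex a k : ex_series (fun z => nb_pmf (r k) p z * winner a k z).
Proof. apply (ex_bnd (r k) p (Hr k) Hp _ Mc). intros; apply winner_abs. Qed.

Lemma WW_bnd a k : - cv <= WW a k <= M.
Proof.
  unfold WW. split.
  - apply exp_bnd_ge with (K := Mc). apply Hr. apply Hp. intros n. apply winner_abs.
    intros; apply winner_bnd.
  - apply exp_bnd_le with (K := Mc). apply Hr. apply Hp. intros n. apply winner_abs.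
    intros; apply winner_bnd.
Qed.

Lemma EnextV_diff a k : EnextV N alpha0 beta0 t V (a + 1)%Z k - EnextV N alpha0 beta0 t V a k = WW a k.
Proof.
  rewrite !EnextV_eq. rewrite <- (exp_minus (r k) p _ _ (outer_ex (a + 1) k) (outer_ex a k)).
  unfold WW. apply exp_ext. intros z. unfold inner, winner.
  rewrite <- (exp_minus (s k) p _ _ (inner_ex (a + 1) k z) (inner_ex a k z)).
  apply exp_ext. intros j. unfold Wf. replace (a + 1 - Z.of_nat z)%Z with (a - Z.of_nat z + 1)%Z by lia. reflexivity.
Qed.


Definition Pr (a : Z) k := nb_exp (r k) p (indZ a).

Lemma Pr_ex a k : ex_series (fun n => nb_pmf (r k) p n * indZ a n).
Proof. apply (ex_bnd (r k) p (Hr k) Hp _ 1). apply indZ_bnd. Qed.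

Lemma Pr_bnd a k : 0 <= Pr a k <= 1.
Proof.
  unfold Pr. split.
  - replace 0 with (- 0) by ring. apply exp_bnd_ge with (K := 1). apply Hr. apply Hp. apply indZ_bnd.
    intros n; unfold indZ; destruct Z_le_dec; lra.
  - apply exp_bnd_le with (K := 1). apply Hr. apply Hp. apply indZ_bnd.
    intros n; unfold indZ; destruct Z_le_dec; lra.
Qed.

Lemma Pr_mono_a a k : Pr a k <= Pr (a + 1)%Z k.
Proof. unfold Pr. apply exp_le. apply Hr. apply Hp. apply Pr_ex. apply Pr_ex. apply indZ_mono. Qed.

Lemma Pr_mono_k a k k' : (k <= k')%nat -> Pr a k' <= Pr a k.
Proof.
  intros Hk. unfold Pr, r. rewrite (rZ_shift alpha0 k k' Hk).
  apply (domm (indZ a) 1). apply Hr. apply Hp. apply indZ_dec. apply indZ_bnd.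
Qed.

Lemma Pr_neg a k : (a < 0)%Z -> Pr a k = 0.
Proof.
  intros Ha. unfold Pr. rewrite (exp_ext _ _ _ (fun _ => 0)). apply exp_const. apply Hr. apply Hp.
  intros n; apply indZ_neg; auto.
Qed.

Lemma partial_le (u : nat -> R) m : (forall n, 0 <= u n) -> ex_series u -> sum_n u m <= Series u.
Proof.
  intros H0 Hex.
  assert (Hw : is_lim_seq (fun n => sum_n u (n + m)) (Series u)).
  { apply (is_lim_seq_incr_n (sum_n u) m). apply Series_correct in Hex. exact Hex. }
  assert (Hle : forall n, sum_n u m <= sum_n u (n + m)).
  { induction n. simpl; lra. simpl. rewrite sumn_S. specialize (H0 (S (n + m))). lra. }
  pose proof (is_lim_seq_le _ _ _ _ Hle (is_lim_seq_const (sum_n u m)) Hw). exact H.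
Qed.

Lemma Pr_large k eps : 0 < eps -> exists a, 1 - eps < Pr a k.
Proof.
  intros He. pose proof (nb_norm (r k) p (Hr k) Hp) as Hn.
  assert (Hl : is_lim_seq (sum_n (nb_pmf (r k) p)) 1) by exact Hn.
  apply is_lim_seq_spec in Hl. destruct (Hl (mkposreal eps He)) as [N0 HN0].
  specialize (HN0 N0 (le_n _)). simpl in HN0.
  exists (Z.of_nat N0). unfold Pr, nb_exp.
  assert (E : sum_n (fun n => nb_pmf (r k) p n * indZ (Z.of_nat N0) n) N0 = sum_n (nb_pmf (r k) p) N0).
  { assert (forall m, (m <= N0)%nat -> sum_n (fun n => nb_pmf (r k) p n * indZ (Z.of_nat N0) n) m = sum_n (nb_pmf (r k) p) m).
    { induction m; intros Hm.
      - rewrite !sumn_O. unfold indZ. destruct Z_le_dec; [simpl; lra | lia].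
      - rewrite !sumn_S, IHm by lia. unfold indZ. destruct Z_le_dec; [simpl; lra | lia]. }
    apply H; lia. }
  pose proof (partial_le (fun n => nb_pmf (r k) p n * indZ (Z.of_nat N0) n) N0) as HP.
  rewrite E in HP. apply Rabs_def2 in HN0. assert (1 - eps < sum_n (nb_pmf (r k) p) N0) by lra.
  eapply Rlt_le_trans. exact H. apply HP.
  intros n. apply Rmult_le_pos. apply nb_pmf_nonneg. apply Hr. apply Hp. unfold indZ; destruct Z_le_dec; lra.
  apply Pr_ex.
Qed.

Definition Gst (a : Z) k := cv * IZR a
  + ch * nb_exp (r k) p (fun z => pos_part (IZR a - INR z))
  + cb * nb_exp (r k) p (fun z => pos_part (INR z - IZR a))
  + EnextV N alpha0 beta0 t V a k.

Lemma pos1_ex a k : ex_series (fun n => nb_pmf (r k) p n * pos_part (IZR a - INR n)).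
Proof.
  apply (ex_lin (r k) p (Hr k) Hp _ (Rabs (IZR a)) 1). intros n.
  eapply Rle_trans. apply pos_part_abs. eapply Rle_trans. apply Rabs_triang.
  rewrite Rabs_Ropp, (Rabs_right (INR n)) by (apply Rle_ge, pos_INR). lra.
Qed.

Lemma pos2_ex a k : ex_series (fun n => nb_pmf (r k) p n * pos_part (INR n - IZR a)).
Proof.
  apply (ex_lin (r k) p (Hr k) Hp _ (Rabs (IZR a)) 1). intros n.
  eapply Rle_trans. apply pos_part_abs. eapply Rle_trans. apply Rabs_triang.
  rewrite Rabs_Ropp, (Rabs_right (INR n)) by (apply Rle_ge, pos_INR). lra.
Qed.

Definition Dst (a : Z) k := Gst (a + 1)%Z k - Gst a k.

Lemma Dst_eq a k : Dst a k = cv - cb + (ch + cb) * Pr a k + WW a k.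
Proof.
  unfold Dst, Gst. rewrite <- (EnextV_diff a k).
  assert (E1 : nb_exp (r k) p (fun z => pos_part (IZR (a + 1) - INR z)) - nb_exp (r k) p (fun z => pos_part (IZR a - INR z)) = Pr a k).
  { rewrite <- (exp_minus (r k) p _ _ (pos1_ex (a + 1) k) (pos1_ex a k)). unfold Pr. apply exp_ext. intros; apply phi_ind. }
  assert (E2 : nb_exp (r k) p (fun z => pos_part (INR z - IZR (a + 1))) - nb_exp (r k) p (fun z => pos_part (INR z - IZR a)) = Pr a k - 1).
  { rewrite <- (exp_minus (r k) p _ _ (pos2_ex (a + 1) k) (pos2_ex a k)).
    rewrite (exp_ext _ _ _ (fun n => indZ a n - 1)) by (intros; apply psi_ind).
    rewrite exp_minus. rewrite exp_const. reflexivity. apply Hr. apply Hp. apply Pr_ex.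
    apply (ex_bnd (r k) p (Hr k) Hp _ 1). intros; rewrite Rabs_R1; lra. }
  assert (E1' : ch * nb_exp (r k) p (fun z => pos_part (IZR (a + 1) - INR z)) = ch * nb_exp (r k) p (fun z => pos_part (IZR a - INR z)) + ch * Pr a k) by (rewrite <- E1; ring).
  assert (E2' : cb * nb_exp (r k) p (fun z => pos_part (INR z - IZR (a + 1))) = cb * nb_exp (r k) p (fun z => pos_part (INR z - IZR a)) + cb * (Pr a k - 1)) by (rewrite <- E2; ring).
  rewrite E1', E2', plus_IZR. ring.
Qed.


Lemma WW_mono_a a k : WW a k <= WW (a + 1)%Z k.
Proof.
  unfold WW. apply exp_le. apply Hr. apply Hp. apply WW_ex. apply WW_ex.
  intros z. unfold winner. apply exp_le. apply Hs. apply Hp. apply winner_ex. apply winner_ex.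
  intros j. replace (a + 1 - Z.of_nat z)%Z with (a - Z.of_nat z + 1)%Z by lia. apply HWx.
Qed.

Lemma WW_neg a k : (a < L)%Z -> WW a k <= 0.
Proof.
  intros Ha. unfold WW. apply exp_bnd_le with (K := Mc). apply Hr. apply Hp. apply winner_abs.
  intros z. unfold winner. apply exp_bnd_le with (K := Mc). apply Hs. apply Hp. intros; apply Wabs.
  intros j. apply HWL. lia.
Qed.

Lemma WW_mono_k a k k' : (k <= k')%nat -> WW a k' <= WW a k.
Proof.
  intros Hk. unfold WW.
  apply Rle_trans with (nb_exp (r k') p (fun z => nb_exp (s k') p (fun j => Wf V (a - Z.of_nat z)%Z (k + z + j)%nat))).
  { apply exp_le. apply Hr. apply Hp. apply WW_ex.
    apply (ex_bnd (r k') p (Hr k') Hp _ Mc). intros z.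
    apply Rabs_le. split.
    - apply exp_bnd_ge with (K := Mc). apply Hs. apply Hp. intros; apply Wabs. intros n0;
      match goal with |- _ <= Wf V ?x ?y => pose proof (HWb x y) end; unfold Mc; lra.
    - apply Rle_trans with M. apply exp_bnd_le with (K := Mc). apply Hs. apply Hp. intros; apply Wabs. intros n0;
      match goal with |- Wf V ?x ?y <= _ => pose proof (HWb x y) end; lra. unfold Mc; lra.
    intros z. unfold winner. apply exp_le. apply Hs. apply Hp. apply winner_ex.
    apply (ex_bnd (s k') p (Hs k') Hp _ Mc). intros; apply Wabs.
    intros j. apply HWk. lia. }
  apply Rle_trans with (nb_exp (r k') p (fun z => nb_exp (s k) p (fun j => Wf V (a - Z.of_nat z)%Z (k + z + j)%nat))).
  { apply exp_le. apply Hr. apply Hp.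
    apply (ex_bnd (r k') p (Hr k') Hp _ Mc). intros z.
    apply Rabs_le. split.
    - apply exp_bnd_ge with (K := Mc). apply Hs. apply Hp. intros; apply Wabs. intros n0;
      match goal with |- _ <= Wf V ?x ?y => pose proof (HWb x y) end; unfold Mc; lra.
    - apply Rle_trans with M. apply exp_bnd_le with (K := Mc). apply Hs. apply Hp. intros; apply Wabs. intros n0;
      match goal with |- Wf V ?x ?y <= _ => pose proof (HWb x y) end; lra. unfold Mc; lra.
    - apply (ex_bnd (r k') p (Hr k') Hp _ Mc). intros z. apply (winner_abs a k z).
    - intros z. unfold s. rewrite (rK_shift N alpha0 k k' HN Hk).
      apply (domm _ Mc). apply Hs. apply Hp.
      intros j. replace (k + z + S j)%nat with (k + z + j + 1)%nat by lia. apply HWk. lia.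
      intros; apply Wabs. }
  unfold r. rewrite (rZ_shift alpha0 k k' Hk).
  apply (domm _ Mc). apply Hr. apply Hp.
  - intros z. apply exp_le. apply Hs. apply Hp. apply winner_ex. apply winner_ex.
    intros j. apply Rle_trans with (Wf V (a - Z.of_nat (S z))%Z (k + z + j)%nat).
    apply HWk. lia.
    pose proof (HWx (a - Z.of_nat (S z))%Z (k + z + j)%nat).
    replace (a - Z.of_nat (S z) + 1)%Z with (a - Z.of_nat z)%Z in H by lia. exact H.
  - intros z. apply (winner_abs a k z).
Qed.

Lemma Dst_mono_a a k : Dst a k <= Dst (a + 1)%Z k.
Proof.
  rewrite !Dst_eq. pose proof (Pr_mono_a a k). pose proof (WW_mono_a a k).
  assert ((ch + cb) * Pr a k <= (ch + cb) * Pr (a + 1)%Z k) by (apply Rmult_le_compat_l; lra). lra.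
Qed.

Lemma Dst_mono_k a k k' : (k <= k')%nat -> Dst a k' <= Dst a k.
Proof.
  intros Hk. rewrite !Dst_eq. pose proof (Pr_mono_k a k k' Hk). pose proof (WW_mono_k a k k' Hk).
  assert ((ch + cb) * Pr a k' <= (ch + cb) * Pr a k) by (apply Rmult_le_compat_l; lra). lra.
Qed.

Lemma Dst_neg a k : (a < Z.min 0 L)%Z -> Dst a k < 0.
Proof.
  intros Ha. rewrite Dst_eq, Pr_neg by lia. pose proof (WW_neg a k ltac:(lia)). lra.
Qed.

Lemma Dst_pos k : exists a, 0 <= Dst a k.
Proof.
  destruct (Pr_large k (ch / (ch + cb))) as [a Ha]. apply Rdiv_lt_0_compat; lra.
  exists a. rewrite Dst_eq. pose proof (WW_bnd a k).
  assert (cb < (ch + cb) * Pr a k).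
  { assert (Heq : (ch + cb) * (1 - ch / (ch + cb)) = cb) by (field; lra).
    rewrite <- Heq at 1. apply Rmult_lt_compat_l; lra. }
  lra.
Qed.

Lemma Dst_le a k : Dst a k <= cv + ch + M.
Proof. rewrite Dst_eq. pose proof (Pr_bnd a k). pose proof (WW_bnd a k).
  assert ((ch + cb) * Pr a k <= (ch + cb) * 1) by (apply Rmult_le_compat_l; lra). lra. Qed.

Lemma delta_ex k : exists d, (forall a, (a < d)%Z -> Dst a k < 0) /\ (forall a, (d <= a)%Z -> 0 <= Dst a k).
Proof.
  destruct (Dst_pos k) as [a0 Ha0'].
  apply (argmin_exists (fun a => Gst a k)) with (a0 := a0) (L0 := Z.min 0 L).
  - intros a. apply Dst_mono_a.
  - exact Ha0'.
  - intros a Ha. apply Dst_neg; auto.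
Qed.

Definition dspec (d : nat -> Z) := forall k, (forall a, (a < d k)%Z -> Dst a k < 0) /\ (forall a, (d k <= a)%Z -> 0 <= Dst a k).

Lemma delta_fun : exists d, dspec d /\ forall k k', (k <= k')%nat -> (d k <= d k')%Z.
Proof.
  exists (fun k => proj1_sig (constructive_indefinite_description _ (delta_ex k))).
  assert (Hs' : dspec (fun k => proj1_sig (constructive_indefinite_description _ (delta_ex k)))).
  { intros k. destruct (constructive_indefinite_description _ (delta_ex k)); simpl; auto. }
  split; auto. intros k k' Hk.
  destruct (Z_le_gt_dec (proj1_sig (constructive_indefinite_description _ (delta_ex k)))
                        (proj1_sig (constructive_indefinite_description _ (delta_ex k')))); auto.
  exfalso. destruct (Hs' k) as [H1 _]. destruct (Hs' k') as [_ H2].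
  set (d := proj1_sig (constructive_indefinite_description _ (delta_ex k'))) in *.
  specialize (H2 d (Z.le_refl _)). specialize (H1 d ltac:(lia)).
  pose proof (Dst_mono_k d k k' Hk). lra.
Qed.

Lemma Qobj_eq x k a : Qobj N alpha0 beta0 cv ch cb t V x k a = Gst a k - cv * IZR x.
Proof. unfold Qobj, Ccost, Gst, r, p. ring. Qed.

Lemma Gst_min (d : nat -> Z) (Hd : dspec d) x k a : (x <= a)%Z -> Gst (Z.max x (d k)) k <= Gst a k.
Proof.
  intros Ha. destruct (Hd k) as [H1 H2].
  destruct (Z_le_gt_dec x (d k)).
  - rewrite Z.max_r by lia. destruct (Z_lt_le_dec a (d k)).
    + left. apply (G_down (fun a => Gst a k) (d k)); auto.
    + apply (G_up (fun a => Gst a k) (d k)); auto.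
  - rewrite Z.max_l by lia. apply (G_up (fun a => Gst a k) x); auto. intros b Hb. apply H2. lia.
Qed.

Definition Vn (x : Z) (k : nat) : R :=
  real (Glb_Rbar (fun y => exists a : Z, (x <= a)%Z /\ y = Qobj N alpha0 beta0 cv ch cb t V x k a)).

Lemma Vn_eq (d : nat -> Z) (Hd : dspec d) x k : Vn x k = Gst (Z.max x (d k)) k - cv * IZR x.
Proof.
  unfold Vn. apply glb_min.
  - exists (Z.max x (d k)). split. lia. rewrite Qobj_eq. reflexivity.
  - intros y [a [Ha ->]]. rewrite Qobj_eq. pose proof (Gst_min d Hd x k a Ha). lra.
Qed.

Lemma Gst_nonneg_part a k : 0 <= Gst a k - cv * IZR a.
Proof.
  unfold Gst.
  assert (0 <= nb_exp (r k) p (fun z => pos_part (IZR a - INR z))).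
  { apply exp_nonneg. apply Hr. apply Hp. apply pos1_ex. intros; apply pos_part_nonneg. }
  assert (0 <= nb_exp (r k) p (fun z => pos_part (INR z - IZR a))).
  { apply exp_nonneg. apply Hr. apply Hp. apply pos2_ex. intros; apply pos_part_nonneg. }
  pose proof (EnextV_nonneg a k).
  assert (0 <= ch * nb_exp (r k) p (fun z => pos_part (IZR a - INR z))) by (apply Rmult_le_pos; lra).
  assert (0 <= cb * nb_exp (r k) p (fun z => pos_part (INR z - IZR a))) by (apply Rmult_le_pos; lra).
  lra.
Qed.

Lemma Vn_nonneg (d : nat -> Z) (Hd : dspec d) x k : 0 <= Vn x k.
Proof.
  rewrite (Vn_eq d Hd). pose proof (Gst_nonneg_part (Z.max x (d k)) k).
  assert (IZR x <= IZR (Z.max x (d k))) by (apply IZR_le; lia).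
  assert (cv * IZR x <= cv * IZR (Z.max x (d k))) by (apply Rmult_le_compat_l; lra). lra.
Qed.

Lemma Gst0_le k : Gst 0%Z k <=
  (A + (cb + C + Mc) * alpha0 * ((1 - p) / p) + C * (INR N - 1) * alpha0 * ((1 - p) / p))
  + (C + (cb + C + Mc) * ((1 - p) / p) + C * (INR N - 1) * ((1 - p) / p)) * INR k.
Proof.
  unfold Gst. pose proof (EnextV_le 0%Z k) as HE. simpl IZR in *. try rewrite Z.abs_0 in HE. simpl IZR in HE.
  assert (H1 : nb_exp (r k) p (fun z => pos_part (0 - INR z)) <= 0 + 0 * mu (r k)).
  { apply exp_mean_le. apply Hr. apply Hp. lra. intros; apply pos_part_nonneg.
    intros n. unfold pos_part, Rmax. pose proof (pos_INR n). destruct Rle_dec; lra. }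
  assert (H2 : nb_exp (r k) p (fun z => pos_part (INR z - 0)) <= 0 + 1 * mu (r k)).
  { apply exp_mean_le. apply Hr. apply Hp. lra. intros; apply pos_part_nonneg.
    intros n. unfold pos_part, Rmax. pose proof (pos_INR n). destruct Rle_dec; lra. }
  assert (ch * nb_exp (r k) p (fun z => pos_part (0 - INR z)) <= ch * (0 + 0 * mu (r k))) by (apply Rmult_le_compat_l; lra).
  assert (cb * nb_exp (r k) p (fun z => pos_part (INR z - 0)) <= cb * (0 + 1 * mu (r k))) by (apply Rmult_le_compat_l; lra).
  assert (Eq : 0 * 0 + ch * (0 + 0 * mu (r k)) + cb * (0 + 1 * mu (r k)) +
    (A + C * INR k + Mc * 0 + C * mu (s k) + (C + Mc) * mu (r k)) =
    (A + (cb + C + Mc) * alpha0 * ((1 - p) / p) + C * (INR N - 1) * alpha0 * ((1 - p) / p))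
    + (C + (cb + C + Mc) * ((1 - p) / p) + C * (INR N - 1) * ((1 - p) / p)) * INR k).
  { unfold mu, r, s, rZ, rK. pose proof Hp. field. lra. }
  rewrite <- Eq. lra.
Qed.

Lemma Wn_lo (d : nat -> Z) (Hd : dspec d) x k : (x < d k)%Z -> Wf Vn x k = - cv.
Proof.
  intros H. unfold Wf. rewrite !(Vn_eq d Hd). rewrite Z.max_r by lia. rewrite (Z.max_r x) by lia.
  rewrite plus_IZR. ring.
Qed.

Lemma Wn_hi (d : nat -> Z) (Hd : dspec d) x k : (d k <= x)%Z -> Wf Vn x k = Dst x k - cv.
Proof.
  intros H. unfold Wf. rewrite !(Vn_eq d Hd). rewrite Z.max_l by lia. rewrite (Z.max_l x) by lia.
  unfold Dst. rewrite plus_IZR. ring.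
Qed.


Lemma Vn_good : exists M' A' C' L', 0 <= M' /\ 0 <= C' /\ (forall x k, 0 <= Vn x k) /\
  (forall k, Vn 0%Z k <= A' + C' * INR k) /\ (forall x k, - cv <= Wf Vn x k <= M') /\
  (forall x k, Wf Vn x k <= Wf Vn (x + 1)%Z k) /\
  (forall x k k', (k <= k')%nat -> Wf Vn x k' <= Wf Vn x k) /\
  (forall x k, (x < L')%Z -> Wf Vn x k <= 0).
Proof.
  destruct delta_fun as [d [Hd Hmono]].
  pose proof Hp as Hp'.
  assert (Hm : 0 <= (1 - p) / p) by (apply Rdiv_le_0_compat; lra).
  assert (HN1 : 0 <= INR N - 1) by (apply le_INR in HN; simpl in HN; lra).
  exists (ch + M), (A + (cb + C + Mc) * alpha0 * ((1 - p) / p) + C * (INR N - 1) * alpha0 * ((1 - p) / p)),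
    (C + (cb + C + Mc) * ((1 - p) / p) + C * (INR N - 1) * ((1 - p) / p)), (d 0%nat).
  assert (HMc : 0 <= Mc) by (unfold Mc; lra).
  refine (conj _ (conj _ (conj _ (conj _ (conj _ (conj _ (conj _ _))))))).
  - lra.
  - assert (0 <= (cb + C + Mc) * ((1 - p) / p)) by (apply Rmult_le_pos; lra).
    assert (0 <= C * (INR N - 1) * ((1 - p) / p)) by (apply Rmult_le_pos; [apply Rmult_le_pos|]; lra). lra.
  - intros; apply (Vn_nonneg d Hd).
  - intros k. rewrite (Vn_eq d Hd). eapply Rle_trans. 2: apply Gst0_le.
    pose proof (Gst_min d Hd 0%Z k 0%Z (Z.le_refl _)). simpl IZR. lra.
  - intros x k. split; destruct (Z_lt_le_dec x (d k)).
    + rewrite (Wn_lo d Hd) by auto. lra.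
    + rewrite (Wn_hi d Hd) by auto. destruct (Hd k) as [_ H2]. specialize (H2 x l). lra.
    + rewrite (Wn_lo d Hd) by auto. lra.
    + rewrite (Wn_hi d Hd) by auto. pose proof (Dst_le x k). lra.
  - intros x k. destruct (Z_lt_le_dec (x + 1) (d k)).
    + rewrite !(Wn_lo d Hd) by lia. lra.
    + rewrite (Wn_hi d Hd (x + 1)) by lia. destruct (Hd k) as [_ H2].
      destruct (Z_lt_le_dec x (d k)).
      * rewrite (Wn_lo d Hd) by lia. specialize (H2 (x + 1)%Z l). lra.
      * rewrite (Wn_hi d Hd) by lia. pose proof (Dst_mono_a x k). lra.
  - intros x k k' Hk. pose proof (Hmono k k' Hk).
    destruct (Z_lt_le_dec x (d k)).
    + rewrite !(Wn_lo d Hd) by lia. lra.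
    + rewrite (Wn_hi d Hd x k) by lia. destruct (Z_lt_le_dec x (d k')).
      * rewrite (Wn_lo d Hd) by lia. destruct (Hd k) as [_ H2]. specialize (H2 x l). lra.
      * rewrite (Wn_hi d Hd) by lia. pose proof (Dst_mono_k x k k' Hk). lra.
  - intros x k Hx. pose proof (Hmono 0%nat k ltac:(lia)). rewrite (Wn_lo d Hd) by lia. lra.
Qed.

End Stage.


Definition Good (cv : R) (V : Z -> nat -> R) := exists (M A C : R) (L : Z), 0 <= M /\ 0 <= C /\ (forall x k, 0 <= V x k) /\
  (forall k, V 0%Z k <= A + C * INR k) /\ (forall x k, - cv <= Wf V x k <= M) /\
  (forall x k, Wf V x k <= Wf V (x + 1)%Z k) /\
  (forall x k k', (k <= k')%nat -> Wf V x k' <= Wf V x k) /\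
  (forall x k, (x < L)%Z -> Wf V x k <= 0).

Lemma good_Vrem N T alpha0 beta0 cv ch cb (HN : (1 <= N)%nat) (Ha0 : 0 < alpha0) (Hb0 : 0 < beta0)
  (Hcv : 0 < cv) (Hch : 0 < ch) (Hcb : 0 < cb) (Hcvb : cv < cb) :
  forall n, Good cv (Vrem N T alpha0 beta0 cv ch cb n).
Proof.
  induction n.
  - exists 0, 0, 0, 0%Z. unfold Wf; simpl. repeat split; intros; lra.
  - destruct IHn as [M [A [C [L [H1 [H2 [H3 [H4 [H5 [H6 [H7 H8]]]]]]]]]]].
    change (Good cv (Vn N alpha0 beta0 cv ch cb (T - S n) (Vrem N T alpha0 beta0 cv ch cb n))).
    exact (Vn_good N alpha0 beta0 cv ch cb (T - S n) _ HN Ha0 Hb0 Hcv Hch Hcb Hcvb M A C L H1 H2 H3 H4 H5 H6 H7 H8).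
Qed.

Theorem proposition5
  (N T : nat) (alpha0 beta0 : R) (cv ch cb : nat -> R)
  (HN : (1 <= N)%nat) (HT : (1 <= T)%nat)
  (Ha0 : 0 < alpha0) (Hb0 : 0 < beta0)
  (Hc : forall i : nat, (1 <= i <= N)%nat ->
          0 < cv i /\ 0 < ch i /\ 0 < cb i /\ cv i < cb i) :
  forall i : nat, (1 <= i <= N)%nat ->
  exists delta : nat -> nat -> Z,
    (forall t k : nat, (t < T)%nat ->
       smallest_minimizer (fun a => Gfun N T alpha0 beta0 (cv i) (ch i) (cb i) t a k)
                          (delta t k)) /\
    (forall (t k : nat) (x : Z), (t < T)%nat ->
       ((x < delta t k)%Z ->
          optimal_action N T alpha0 beta0 (cv i) (ch i) (cb i) t x k (delta t k)) /\
       ((delta t k <= x)%Z ->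
          optimal_action N T alpha0 beta0 (cv i) (ch i) (cb i) t x k x)) /\
    (forall t k k' : nat, (t < T)%nat -> (k <= k')%nat ->
       (delta t k <= delta t k')%Z).
Proof.
  intros i Hi. destruct (Hc i Hi) as [Hcv [Hch [Hcb Hcvb]]].
  set (cvi := cv i) in *. set (chi := ch i) in *. set (cbi := cb i) in *.
  set (W := fun t => Vt N T alpha0 beta0 cvi chi cbi (t + 1)).
  assert (Hex : forall t : nat, exists d : nat -> Z,
    dspec N alpha0 beta0 cvi chi cbi t (W t) d /\ (forall k k', (k <= k')%nat -> (d k <= d k')%Z)).
  { intros t. destruct (good_Vrem N T alpha0 beta0 cvi chi cbi HN Ha0 Hb0 Hcv Hch Hcb Hcvb (T - (t + 1)))
      as [M [A [C [L [H1 [H2 [H3 [H4 [H5 [H6 [H7 H8]]]]]]]]]]].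
    exact (delta_fun N alpha0 beta0 cvi chi cbi t (W t) HN Ha0 Hb0 Hcv Hch Hcb Hcvb M A C L H1 H2 H3 H4 H5 H6 H7 H8). }
  set (delta := fun t => proj1_sig (constructive_indefinite_description _ (Hex t))).
  assert (Hd : forall t, dspec N alpha0 beta0 cvi chi cbi t (W t) (delta t) /\
                 (forall k k', (k <= k')%nat -> (delta t k <= delta t k')%Z)).
  { intros t. unfold delta. destruct (constructive_indefinite_description _ (Hex t)); simpl; auto. }
  assert (HG : forall t a k, Gfun N T alpha0 beta0 cvi chi cbi t a k = Gst N alpha0 beta0 cvi chi cbi t (W t) a k).
  { intros; reflexivity. }
  exists delta. split; [| split].
  - intros t k Ht. destruct (Hd t) as [Hs _]. destruct (Hs k) as [H1 H2]. split.
    + intros a. rewrite !HG. destruct (Z_lt_le_dec a (delta t k)).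
      * left. apply (G_down (fun a => Gst N alpha0 beta0 cvi chi cbi t (W t) a k) (delta t k)); auto.
      * apply (G_up (fun a => Gst N alpha0 beta0 cvi chi cbi t (W t) a k) (delta t k)); auto.
    + intros a Ha. rewrite !HG. apply (G_down (fun a => Gst N alpha0 beta0 cvi chi cbi t (W t) a k) (delta t k)); auto.
  - intros t k x Ht. destruct (Hd t) as [Hs _]. split.
    + intros Hx. split. lia. intros a' Ha'. fold (W t). rewrite !Qobj_eq.
      pose proof (Gst_min N alpha0 beta0 cvi chi cbi t (W t) HN (delta t) Hs x k a' Ha').
      rewrite Z.max_r in H by lia. lra.
    + intros Hx. split. lia. intros a' Ha'. fold (W t). rewrite !Qobj_eq.
      pose proof (Gst_min N alpha0 beta0 cvi chi cbi t (W t) HN (delta t) Hs x k a' Ha').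
      rewrite Z.max_l in H by lia. lra.
  - intros t k k' Ht Hk. destruct (Hd t) as [_ Hm]. auto.
Qed.
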